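(* Consider $N$ sellers $i=1,\dots,N$ over a time horizon $[0,H]$, a reserve-utility function $\underline{R}:[0,H]\to\mathbb{R}$, and selection functions $f_i:\mathbb{R}^N\times\mathbb{R}\to\mathbb{R}$. Each seller $i$ has true-metric functions $e_i^T,e_i^C:[0,H]\to\mathbb{R}$ and estimated-score functions $\hat e_i^T,\hat e_i^C:[0,H]\to\mathbb{R}$, where we allow $e_i^T\neq e_i^C$ and $\hat e_i^T\ne\hat e_i^C$. In the counterfactual interleaving experiment without feedback loops (defined in the context), let each seller be independently assigned to the treatment group $\mathcal{T}$ with probability $p\in(0,1)$ and otherwise to the control group $\mathcal{C}$. Then $\mathbb{E}[\widehat{GTE}]=\mathrm{GTE}$, where the expectation is over the random assignment.
   Context: Setting without feedback loops: ranking scores equal estimated scores. Global treatment regime: $r_i^{GT}(t)=\hat e_i^T(t)$, $I_i^{GT}(t)=\mathbb{I}\{f_i(r_1^{GT}(t),\dots,r_N^{GT}(t),\underline{R}(t))\ge0\}$, $O_i^{GT}(t)=I_i^{GT}(t)e_i^T(t)$. Global control regime: the same with $\hat e_i^C,e_i^C$, giving $O_i^{GC}$. $\mathrm{GTE}=\frac1N\sum_{i=1}^N\int_0^H(O_i^{GT}(t)-O_i^{GC}(t))dt$. Counterfactual interleaving experiment: given a disjoint partition $\{1,\dots,N\}=\mathcal{T}\cup\mathcal{C}$, two rankings are computed for all sellers, $r_j^T(t)=\hat e_j^T(t)$ and $r_j^C(t)=\hat e_j^C(t)$ for all $j=1,\dots,N$; for $i\in\mathcal{T}$, $I_i^T(t)=\mathbb{I}\{f_i(r_1^T(t),\dots,r_N^T(t),\underline{R}(t))\ge0\}$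 and $O_i^T(t)=I_i^T(t)e_i^T(t)$; for $i\in\mathcal{C}$, $I_i^C(t)=\mathbb{I}\{f_i(r_1^C(t),\dots,r_N^C(t),\underline{R}(t))\ge0\}$ and $O_i^C(t)=I_i^C(t)e_i^C(t)$ (position conflicts between the two rankings are ignored). The estimator is $\widehat{GTE}=\frac{1}{Np}\sum_{i\in\mathcal{T}}\int_0^H O_i^T(t)dt-\frac{1}{N(1-p)}\sum_{i\in\mathcal{C}}\int_0^H O_i^C(t)dt$. *)

(* Defs.v *)
From HB Require Import structures.
From mathcomp Require Import all_boot all_order all_algebra.
From mathcomp Require Import all_classical all_reals all_analysis.
Set Implicit Arguments. Unset Strict Implicit. Unset Printing Implicit Defensive.
Import Order.TTheory GRing.Theory Num.Theory.
Local Open Scope classical_set_scope.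
Local Open Scope ring_scope.

Section Interleaving.
Variables (R : realType) (N : nat).

Definition int_H (H : R) (g : R -> R) : R :=
  Rintegral (@lebesgue_measure R) `[0, H] g.

Definition ranking (ehat : 'I_N -> R -> R) (t : R) : 'rV[R]_N :=
  \row_j ehat j t.

Definition sel_ind (f : 'I_N -> 'rV[R]_N -> R -> R) (Rres : R -> R)
  (ehat : 'I_N -> R -> R) (i : 'I_N) (t : R) : R :=
  if 0 <= f i (ranking ehat t) (Rres t) then 1 else 0.

Definition O_global (f : 'I_N -> 'rV[R]_N -> R -> R) (Rres : R -> R) (ehat e : 'I_N -> R -> R) (i : 'I_N) (t : R) : R :=
  sel_ind f Rres ehat i t * e i t.

Definition GTE (H : R) (f : 'I_N -> 'rV[R]_N -> R -> R) (Rres : R -> R) (eT eC ehT ehC : 'I_N -> R -> R) : R :=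
  N%:R^-1 * \sum_(i < N)
    int_H H (fun t => O_global f Rres ehT eT i t - O_global f Rres ehC eC i t).

(* Counterfactual interleaving: two rankings r^T, r^C computed for all
   sellers; treated seller i uses r^T and e^T, control seller uses r^C, e^C. *)
Definition O_treat (f : 'I_N -> 'rV[R]_N -> R -> R) (Rres : R -> R) (ehT eT : 'I_N -> R -> R) (i : 'I_N) (t : R) : R :=
  (if 0 <= f i (ranking ehT t) (Rres t) then 1 else 0) * eT i t.
Definition O_ctrl (f : 'I_N -> 'rV[R]_N -> R -> R) (Rres : R -> R) (ehC eC : 'I_N -> R -> R) (i : 'I_N) (t : R) : R :=
  (if 0 <= f i (ranking ehC t) (Rres t) then 1 else 0) * eC i t.

Definition GTE_hat (H p : R) (f : 'I_N -> 'rV[R]_N -> R -> R) (Rres : R -> R) (eT eC ehT ehC : 'I_N -> R -> R)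
  (T : {set 'I_N}) : R :=
  (N%:R * p)^-1 * \sum_(i in T) int_H H (O_treat f Rres ehT eT i)
  - (N%:R * (1 - p))^-1 * \sum_(i in ~: T) int_H H (O_ctrl f Rres ehC eC i).

(* probability of assignment T when each seller independently is treated
   with probability p *)
Definition assign_prob (p : R) (T : {set 'I_N}) : R :=
  p ^+ #|T| * (1 - p) ^+ (N - #|T|).

Definition E_assign (p : R) (X : {set 'I_N} -> R) : R :=
  \sum_(T : {set 'I_N}) assign_prob p T * X T.

End Interleaving.

(* Main.v *)
From HB Require Import structures.
From mathcomp Require Import all_boot all_order all_algebra.
From mathcomp Require Import all_classical all_reals all_analysis.
Require Import Defs.
Import Order.TTheory GRing.Theory Num.Theory.
Local Open Scope ring_scope.

Lemma sum_sets (R : comRingType) (I : finType) (G : I -> bool -> R) :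
  \sum_(T : {set I}) \prod_j G j (j \in T) = \prod_j (G j true + G j false).
Proof.
transitivity (\prod_j \sum_(b : bool) G j b); last first.
  by apply: eq_bigr => j _; rewrite big_bool.
rewrite bigA_distr_bigA /=.
rewrite (reindex (fun g : {ffun I -> bool} => [set x | g x])).
  by apply: eq_bigr => g _; apply: eq_bigr => j _; rewrite inE.
apply: onW_bij.
exists (fun T : {set I} => [ffun x => x \in T]).
  by move=> g; apply/ffunP => x; rewrite ffunE inE.
by move=> T; apply/setP => x; rewrite inE ffunE.
Qed.

Lemma assign_prodE (R : realType) (N : nat) (p : R) (T : {set 'I_N}) :
  assign_prob p T = \prod_j (if j \in T then p else 1 - p).
Proof.
rewrite /assign_prob (bigID (mem T)) /=.
rewrite (eq_bigr (fun _ => p)); last by move=> j ->.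
rewrite [X in _ = _ * X](eq_bigr (fun _ => 1 - p)); last by move=> j /negbTE ->.
rewrite !prodr_const; congr (_ * _ ^+ _).
have := cardC (mem T); rewrite card_ord => HN.
by rewrite -{1}HN addnC addnK.
Qed.

Lemma marginal (R : realType) (N : nat) (p : R) (i : 'I_N) (c : bool) :
  \sum_(T : {set 'I_N}) assign_prob p T * ((i \in T) == c)%:R
  = if c then p else 1 - p.
Proof.
pose G (j : 'I_N) (b : bool) :=
  (if b then p else 1 - p) * (if j == i then (b == c)%:R else 1).
transitivity (\sum_(T : {set 'I_N}) \prod_j G j (j \in T)).
  apply: eq_bigr => T _; rewrite assign_prodE /G big_split /=; congr (_ * _).
  rewrite -big_mkcond /= big_pred1_eq //.
rewrite sum_sets (bigD1 i) //= big1 ?mulr1.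
  by rewrite /G eqxx; case: (c) => /=; rewrite ?mulr1 ?mulr0 ?addr0 ?add0r.
by move=> j /negbTE nji; rewrite /G nji !mulr1 subrKC.
Qed.

Theorem proposition2 (R : realType) (N : nat) (H p : R)
  (Rres : R -> R) (f : 'I_N -> 'rV[R]_N -> R -> R)
  (eT eC ehT ehC : 'I_N -> R -> R) :
  (0 < N)%N -> 0 < p < 1 ->
  (forall i, (@lebesgue_measure R).-integrable `[0, H]
      (fun t => (O_global f Rres ehT eT i t)%:E)) ->
  (forall i, (@lebesgue_measure R).-integrable `[0, H]
      (fun t => (O_global f Rres ehC eC i t)%:E)) ->
  E_assign p (GTE_hat H p f Rres eT eC ehT ehC) = GTE H f Rres eT eC ehT ehC.
Proof.
move=> N0 /andP[p0 p1] iT iC.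
set A := fun i => int_H H (O_treat f Rres ehT eT i).
set B := fun i => int_H H (O_ctrl f Rres ehC eC i).
have hG : GTE H f Rres eT eC ehT ehC = N%:R^-1 * \sum_i (A i - B i).
  rewrite /GTE; congr (_ * _); apply: eq_bigr => i _.
  rewrite /int_H; apply: (RintegralB _ (iT i) (iC i)); exact: measurable_itv.
rewrite hG /E_assign /GTE_hat.
have Nn0 : N%:R != 0 :> R by rewrite pnatr_eq0 -lt0n.
have pn0 : p != 0 by rewrite gt_eqF.
have qn0 : 1 - p != 0 by rewrite subr_eq0 gt_eqF.
transitivity ((N%:R * p)^-1 * \sum_i A i * p - (N%:R * (1 - p))^-1 * \sum_i B i * (1 - p)).
  transitivity (\sum_(T : {set 'I_N})
     ((N%:R * p)^-1 * \sum_i A i * (assign_prob p T * ((i \in T) == true)%:R)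
     - (N%:R * (1 - p))^-1 * \sum_i B i * (assign_prob p T * ((i \in T) == false)%:R))).
    apply: eq_bigr => T _; set w := assign_prob p T.
    rewrite mulrBr; congr (_ - _); rewrite mulrCA; congr (_ * _).
      rewrite mulr_sumr big_mkcond /=; apply: eq_bigr => i _.
      by case: (i \in T); rewrite /= ?mulr1 ?mulr0 // mulrC.
    rewrite mulr_sumr big_mkcond /=; apply: eq_bigr => i _.
    by rewrite inE; case: (i \in T); rewrite /= ?mulr1 ?mulr0 // mulrC.
  rewrite sumrB -!mulr_sumr exchange_big [X in _ - _ * X]exchange_big /=.
  congr (_ * _ - _ * _); apply: eq_bigr => i _; by rewrite -mulr_sumr marginal.
rewrite !invfM -!mulrA.
have -> : p^-1 * (\sum_i A i * p) = \sum_i A i.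
  by rewrite mulrC -mulr_suml mulfK.
have -> : (1 - p)^-1 * (\sum_i B i * (1 - p)) = \sum_i B i.
  by rewrite mulrC -mulr_suml mulfK.
by rewrite -mulrBr sumrB.
Qed.
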